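(* Let $F$ be any field and let $n,p$ be positive integers with $p>1$, $n\ge p$ and $p\mid n$. Then there exists an $(n,p)$ block invertible square matrix over $F$; that is, there exists an invertible $n\times n$ matrix $M$ over $F$ such that, when $M$ is partitioned into $(n/p)^2$ contiguous $p\times p$ blocks $B_{i,j}$ ($1\le i,j\le n/p$), every block $B_{i,j}$ is an invertible $p\times p$ matrix.
   Context: For positive integers $a,b,p$ with $p\mid a$ and $p\mid b$, an $a\times b$ matrix (with $a$ rows and $b$ columns) over $F$ is partitioned into $p\times p$ blocks $B_{i,j}$, where $B_{i,j}$ is the submatrix formed by rows $(i-1)p+1,\dots,ip$ and columns $(j-1)p+1,\dots,jp$. Such a matrix is called block invertible (with block size $p$) if every block $B_{i,j}$ is invertible. An $n\times n$ matrix is an $(n,p)$ block invertible square matrix if it is block invertible with block size $p$ and is itself invertible. *)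

(* Defs.v *)
From HB Require Import structures.
From mathcomp Require Import all_boot all_order all_algebra.
Set Implicit Arguments. Unset Strict Implicit. Unset Printing Implicit Defensive.
Import GRing.Theory.
Local Open Scope ring_scope.

(* Entry of A at natural indices (r, c); 0 if out of range (never used
   out of range in block_of below). *)
Definition mx_nat {F : fieldType} {a b : nat} (A : 'M[F]_(a, b)) (r c : nat) : F :=
  match @insub _ (fun k => (k < a)%N) 'I_a r, @insub _ (fun k => (k < b)%N) 'I_b c with
  | Some r', Some c' => A r' c'
  | _, _ => 0
  end.

Definition block_of {F : fieldType} {a b : nat} (p : nat) (A : 'M[F]_(a, b)) (i j : nat)
  : 'M[F]_p :=
  \matrix_(r < p, c < p) mx_nat A (i * p + r) (j * p + c).

Definition block_invertible {F : fieldType} {a b : nat} (p : nat) (A : 'M[F]_(a, b)) : Prop :=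
  [/\ (p %| a)%N, (p %| b)%N &
   forall i j : nat, (i < a %/ p)%N -> (j < b %/ p)%N ->
     block_of p A i j \in unitmx].

Definition block_invertible_square {F : fieldType} {n : nat} (p : nat) (M : 'M[F]_n) : Prop :=
  block_invertible p M /\ M \in unitmx.

(* Main.v *)
Require Import Defs.
From mathcomp Require Import all_boot all_order all_algebra.
From mathcomp Require Import perm zify.
Import GRing.Theory.
Local Open Scope ring_scope.

Lemma sum_block (F : fieldType) (k p : nat) (f : nat -> F) :
  \sum_(r < k * p) f r = \sum_(i < k) \sum_(s < p) f (i * p + s)%N.
Proof.
elim: k => [|k IH]; first by rewrite mul0n !big_ord0.
rewrite big_ord_recr /= -IH -!(big_mkord xpredT) mulSn addnC.
rewrite (@big_cat_nat _ _ _ (k * p)) //=; last by rewrite leq_addr.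
congr (_ + _).
have := @big_addn F 0 +%R 0 (k * p + p) (k * p) xpredT f.
rewrite add0n => ->; rewrite addKn big_mkord.
by apply: eq_bigr => i _; rewrite addnC.
Qed.

Lemma mx_nat_val (F : fieldType) a b (M : 'M[F]_(a, b)) (r : 'I_a) (c : 'I_b) :
  mx_nat M r c = M r c.
Proof.
rewrite /mx_nat (insubT (fun k => (k < a)%N) (ltn_ord r)) (insubT (fun k => (k < b)%N) (ltn_ord c)).
by congr (M _ _); apply: val_inj.
Qed.

Section AB.
Variables (F : fieldType) (q : nat).
Local Notation p := q.+2.

Definition Am : 'M[F]_p := \matrix_(i, j) ((i == j)%:R + (i.+1 == j :> nat)%:R).
Definition Pm : 'M[F]_p := perm_mx (perm (@ordS_inj p)).
Definition Bm : 'M[F]_p := Am - Pm.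

Lemma Am_unit : Am \in unitmx.
Proof.
rewrite unitmxE -det_tr det_trig.
  rewrite big1 ?unitr1 // => i _; rewrite !mxE eqxx.
  rewrite (_ : (i.+1 == i :> nat) = false) ?addr0 //.
  apply/negbTE. Time lia.
apply/is_trig_mxP => i j lij; rewrite !mxE.
rewrite -val_eqE /= (gtn_eqF lij) (_ : (j.+1 == i :> nat) = false) ?addr0 //.
apply/negbTE; lia.
Qed.


Lemma Pm_unit : Pm \in unitmx.
Proof. exact: unitmx_perm. Qed.

Lemma Pm_entry (i j : 'I_p) : Pm i j = ((i.+1 %% p)%N == j :> nat)%:R.
Proof. by rewrite /Pm /perm_mx !mxE permE. Qed.

Lemma Bm_entry (i j : 'I_p) : Bm i j = Am i j - Pm i j.
Proof. by rewrite /Bm mxE [(- Pm) i j]mxE. Qed.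

Lemma Bm_unit : Bm \in unitmx.
Proof.
rewrite unitmxE det_trig.
  rewrite big1 ?unitr1 // => i _; rewrite Bm_entry Pm_entry !mxE eqxx.
  rewrite (gtn_eqF (ltnSn i)) addr0.
  rewrite (_ : ((i.+1 %% p)%N == i :> nat) = false) ?subr0 //.
  have := ltn_ord i; case: (ltngtP i.+1 p) => H _.
  - by rewrite modn_small //; apply/negbTE; lia.
  - lia.
  - by rewrite H modnn; apply/negbTE; lia.
apply/is_trig_mxP => i j lij; rewrite Bm_entry Pm_entry !mxE.
rewrite -val_eqE /= (ltn_eqF lij) add0r modn_small ?subrr //.
by have := ltn_ord j; lia.
Qed.

Lemma AB_unit : Am - Bm \in unitmx.
Proof. by rewrite /Bm opprB addrC subrK Pm_unit. Qed.
End AB.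

Lemma sum_block' (F : fieldType) (n k p : nat) (f : nat -> F) : n = (k * p)%N ->
  \sum_(r < n) f r = \sum_(i < k) \sum_(s < p) f (i * p + s)%N.
Proof. by move=> ->; apply: sum_block. Qed.

Theorem mainTheorem2 (F : fieldType) (n p : nat)
  (hp : (1 < p)%N) (hnp : (p <= n)%N) (hdvd : (p %| n)%N) :
  exists M : 'M[F]_n, block_invertible_square p M.
Proof.
case: p hp hnp hdvd => [|[|q]] // _ hnp hdvd.
set p := q.+2.
set k := (n %/ p)%N.
have hn : n = (k * p)%N by rewrite divnK.
have kpos : (0 < k)%N by rewrite divn_gt0.
pose X (i j : nat) : 'M[F]_p := if (j <= i)%N then Am F q else Bm F q.
pose Mf (r c : nat) : F := X (r %/ p)%N (c %/ p)%N (inord (r %% p)) (inord (c %% p)).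
pose M : 'M[F]_n := \matrix_(r, c) Mf r c.
have Mfb : forall i j (s s' : 'I_p), Mf (i * p + s)%N (j * p + s')%N = X i j s s'.
  move=> i j s s'; rewrite /Mf !divnMDl // !divn_small // !addn0.
  by rewrite !modnMDl !modn_small // !inord_val.
have blk : forall i j, (i < k)%N -> (j < k)%N -> block_of p M i j = X i j.
  move=> i j hi hj; apply/matrixP => s s'; rewrite mxE.
  have Hr : (i * p + s < n)%N by rewrite hn; have := ltn_ord s; nia.
  have Hc : (j * p + s' < n)%N by rewrite hn; have := ltn_ord s'; nia.
  rewrite -[(i * p + s)%N]/(nat_of_ord (Ordinal Hr)) -[(j * p + s')%N]/(nat_of_ord (Ordinal Hc)).
  by rewrite mx_nat_val mxE /= Mfb.
exists M; split; last first.
  rewrite -row_free_unit; apply: inj_row_free => v hv.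
  pose W (i : nat) : 'rV[F]_p := \row_(s < p) mx_nat v 0 (i * p + s)%N.
  have C : forall j, (j < k)%N -> \sum_(i < k) W i *m X i j = 0.
    move=> j hj; apply/rowP => s'.
    have Hc : (j * p + s' < n)%N by rewrite hn; have := ltn_ord s'; nia.
    have := congr1 (fun A : 'rV_n => A 0 (Ordinal Hc)) hv; rewrite !mxE => e.
    rewrite summxE; transitivity (0 : F); last by [].
    rewrite -[X in _ = X]e.
    rewrite (eq_bigr (fun r : 'I_n => mx_nat v 0 r * Mf r (j * p + s')%N)); last first.
      by move=> r _; rewrite /M mxE -(@mx_nat_val F 1 n v ord0 r).
    rewrite (@sum_block' F n k p (fun r => mx_nat v 0 r * Mf r (j * p + s')%N) hn).
    apply: eq_bigr => i _; rewrite mxE; apply: eq_bigr => s _.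
    by rewrite !mxE Mfb.
  have D : forall j, (j.+1 < k)%N -> W j = 0.
    move=> j hj.
    have hj0 : (j < k)%N by apply: ltnW.
    have e : \sum_(i < k) W i *m (X i j - X i j.+1) = W j *m (Am F q - Bm F q).
      rewrite (bigD1 (Ordinal hj0)) //= big1 ?addr0.
        by rewrite /X leqnn ltnn.
      move=> i; rewrite -val_eqE /= => ne.
      rewrite /X; case: (ltngtP j i) => h.
      - by rewrite subrr mulmx0.
      - have h1 : (j <= i)%N = false by apply/negbTE; lia.
        have h2 : (j.+1 <= i)%N = false by apply/negbTE; lia.
        by rewrite ?h1 ?h2 subrr mulmx0.
      - by rewrite h eqxx in ne.
    have e2 : W j *m (Am F q - Bm F q) = 0.
      rewrite -e.
      rewrite (eq_bigr (fun i : 'I_k => W i *m X i j - W i *m X i j.+1)); last first.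
        by move=> i _; rewrite mulmxBr.
      by rewrite sumrB !C // subrr.
    by rewrite -(mulmxK (AB_unit F q) (W j)) e2 mul0mx.
  have Wz : forall i, (i < k)%N -> W i = 0.
    move=> i hi; case: (ltnP i.+1 k) => h; first exact: D.
    have hk : i = k.-1 by lia.
    have e := C 0%N kpos.
    rewrite (bigD1 (Ordinal hi)) //= big1 ?addr0 in e.
      by rewrite -(mulmxK (Am_unit F q) (W i)) /X /= e mul0mx.
    move=> j; rewrite -val_eqE /= => ne; rewrite D ?mul0mx //.
    have := ltn_ord j; lia.
  apply/rowP => r; rewrite mxE.
  have hr : (r %/ p < k)%N by rewrite ltn_divLR // -hn.
  have := congr1 (fun A : 'rV_p => A 0 (Ordinal (ltn_pmod r (isT : (0 < p)%N)))) (Wz _ hr).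
  rewrite !mxE /= -divn_eq => <-.
  by rewrite -(@mx_nat_val F 1 n v ord0 r).
split => // i j hi hj; rewrite blk // /X; case: ifP => _.
  exact: Am_unit.
exact: Bm_unit.
Qed.
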